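(* For every $f\in\mathfrak N_0$, $(h\hat S-\hat Sh)f=-if$, and for every $f\in\mathfrak N_1$, $(h\hat S^*-\hat S^*h)f=-if$.
   Context: Work in $L^2(\mathbb{R})$; $q$ is multiplication by $x$, $p=-i\,d/dx$, $h=\frac12(p^2+q^2)$ on $D(p^2)\cap D(q^2)$. Let $\mathbb{H}=\{z:\operatorname{Im}z>0\}$, $\xi_z(x)=e^{izx^2/2}$, $\mathscr{C}(z)=\frac{z-i}{z+i}$, $\log w=\log|w|+i\arg w$ with $-\pi\le\arg w<\pi$. For $z\in\mathbb H\setminus\{i\}$ set $L_0(z)=\log(-\mathscr C(z))$ and $L_k(z)=\frac{d^{k-1}}{dz^{k-1}}\frac{2i}{1+z^2}$ for $k\ge1$. For $n\ge0$ let $[t_z^nL](x,z)=\sum_{k=0}^n\binom nkx^{2(n-k)}(-2i)^kL_k(z)$ (i.e. $(x^2-2i\,\frac{d}{dz})^n$ applied to $\log(-\mathscr C(z))$), and for a polynomial $\rho(s)=\sum c_ns^n$ let $[\rho(t_z)L]=\sum c_n[t^n_zL]$. $\mathfrak N_0$ is the span of $\{\rho(x^2)\xi_z:\rho$ polynomial, $z\in\mathbb H\setminus\{i\}\}$ and $\mathfrak N_1$ the span of $\{\rho(x^2)x\xi_z\}$ (same ranges). The linear operators $\hat S$ on $\mathfrak N_0$ and $\hat S^*$ on $\mathfrak N_1$ (notation only) are defined by $\hat S(\rho(x^2)\xi_z)=\frac i2[\rho(t_z)L](x,z)\xi_z$ and $\hat S^*(\rho(x^2)x\xi_z)=\frac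 i2[\rho(t_z)L](x,z)x\xi_z$, extended linearly. *)

(* Defs.v *)
From Stdlib Require Import Reals List.
From Coquelicot Require Import Coquelicot.
Import ListNotations.

Local Open Scope R_scope.

Definition Cexp' (w : C) : C :=
  (exp (fst w) * cos (snd w), exp (fst w) * sin (snd w)).

(* Principal argument with the convention -PI <= arg w < PI (w <> 0). *)
Definition carg (w : C) : R :=
  if Rlt_dec 0 (snd w) then acos (fst w / Cmod w)
  else if Rlt_dec (snd w) 0 then - acos (fst w / Cmod w)
  else if Rle_dec 0 (fst w) then 0 else - PI.

Definition clog (w : C) : C := (ln (Cmod w), carg w).

Definition cayley (z : C) : C := ((z - Ci) / (z + Ci))%C.

Definition xi (z : C) (x : R) : C := Cexp' (Ci * z * RtoC (x * x) / RtoC 2)%C.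

Fixpoint Cder_n (n : nat) (f : C -> C) : C -> C :=
  match n with
  | O => f
  | S m => C_derive (Cder_n m f)
  end.

Definition Lk (k : nat) (z : C) : C :=
  match k with
  | O => clog (- cayley z)%C
  | S m => Cder_n m (fun w => (RtoC 2 * Ci) / (RtoC 1 + w * w))%C z
  end.

Definition Csum (l : list C) : C := fold_right Cplus (RtoC 0) l.

Definition tL (n : nat) (x : R) (z : C) : C :=
  Csum (map (fun k =>
    (RtoC (Stdlib.Reals.Binomial.C n k) * RtoC (x ^ (2 * (n - k))%nat) *
     Cpow (- (RtoC 2 * Ci)) k * Lk k z)%C) (seq 0 (S n))).

Definition peval (rho : list C) (s : C) : C :=
  Csum (map (fun n => (nth n rho (RtoC 0) * Cpow s n)%C) (seq 0 (length rho))).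

Definition rhotL (rho : list C) (x : R) (z : C) : C :=
  Csum (map (fun n => (nth n rho (RtoC 0) * tL n x z)%C) (seq 0 (length rho))).

(* A representation of an element of N_0 (resp. N_1): a finite list of pairs
   (rho_j, z_j), standing for  sum_j rho_j(x^2) xi_{z_j}
   (resp. sum_j rho_j(x^2) x xi_{z_j}); complex scalars are absorbed in rho_j. *)
Definition valid_rep (r : list (list C * C)) : Prop :=
  List.Forall (fun p => 0 < snd (snd p) /\ snd p <> Ci) r.

Definition N0fun (r : list (list C * C)) (x : R) : C :=
  Csum (map (fun p => (peval (fst p) (RtoC (x * x)) * xi (snd p) x)%C) r).

Definition N1fun (r : list (list C * C)) (x : R) : C :=
  Csum (map (fun p => (peval (fst p) (RtoC (x * x)) * RtoC x * xi (snd p) x)%C) r).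

Definition Shat (r : list (list C * C)) (x : R) : C :=
  Csum (map (fun p => (Ci / RtoC 2 * rhotL (fst p) x (snd p) * xi (snd p) x)%C) r).

Definition Shatstar (r : list (list C * C)) (x : R) : C :=
  Csum (map (fun p =>
    (Ci / RtoC 2 * rhotL (fst p) x (snd p) * RtoC x * xi (snd p) x)%C) r).

Definition D2 (f : R -> C) (x : R) : C :=
  (Derive_n (fun t => fst (f t)) 2 x, Derive_n (fun t => snd (f t)) 2 x).

Definition hop (f : R -> C) (x : R) : C :=
  (RtoC (1/2) * (- D2 f x + RtoC (x * x) * f x))%C.

(* Main.v *)
Require Import Defs.
From Stdlib Require Import Reals List Lia Lra FunctionalExtensionality.
From Coquelicot Require Import Coquelicot.
Import ListNotations.
Local Open Scope C_scope.

Fixpoint csum (f : nat -> C) (n : nat) : C :=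
  match n with O => RtoC 0 | S m => csum f m + f m end.

Lemma csum_ext (f g : nat -> C) n : (forall k, (k < n)%nat -> f k = g k) -> csum f n = csum g n.
Proof. induction n; simpl; intros H; auto. rewrite IHn by (intros; apply H; lia). rewrite H by lia. auto. Qed.

Lemma csum_plus (f g : nat -> C) n : csum (fun k => f k + g k) n = csum f n + csum g n.
Proof. induction n; simpl. ring. rewrite IHn. ring. Qed.

Lemma csum_scal (c : C) (f : nat -> C) n : csum (fun k => c * f k) n = c * csum f n.
Proof. induction n; simpl. ring. rewrite IHn. ring. Qed.

Lemma csum_mul_r (f : nat -> C) n c : csum f n * c = csum (fun k => f k * c) n.
Proof. induction n; simpl. ring. rewrite <- IHn. ring. Qed.

Lemma csum_zero (f : nat -> C) n : (forall k, (k < n)%nat -> f k = RtoC 0) -> csum f n = RtoC 0.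
Proof. induction n; simpl; intros H; auto. rewrite IHn by (intros; apply H; lia). rewrite H by lia. ring. Qed.

Lemma csum_first (f : nat -> C) n : csum f (S n) = f O + csum (fun k => f (S k)) n.
Proof. induction n. simpl. ring. change (csum f (S (S n))) with (csum f (S n) + f (S n)).
 rewrite IHn. simpl. ring. Qed.

Lemma Csum_map_seq (f : nat -> C) m n : Csum (map f (seq m n)) = csum (fun k => f (m + k)%nat) n.
Proof. revert m. induction n; intros m. reflexivity.
 rewrite csum_first. rewrite Nat.add_0_r.
 change (seq m (S n)) with (m :: seq (S m) n). change (Csum (map f (m :: seq (S m) n))) with (f m + Csum (map f (seq (S m) n))).
 rewrite IHn. f_equal. apply csum_ext. intros. f_equal. lia. Qed.

Lemma Csum_app l1 l2 : Csum (l1 ++ l2) = Csum l1 + Csum l2.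
Proof. induction l1; simpl. unfold Csum; simpl; ring. unfold Csum in *; simpl. rewrite IHl1. ring. Qed.

Lemma Cbin_n_0 n : Binomial.C n 0 = 1%R.
Proof. unfold Binomial.C. rewrite Nat.sub_0_r. simpl. field. apply INR_fact_neq_0. Qed.
Lemma Cbin_n_n n : Binomial.C n n = 1%R.
Proof. unfold Binomial.C. rewrite Nat.sub_diag. simpl. field. apply INR_fact_neq_0. Qed.

Definition W (n : nat) (y : nat -> C) (u : R) : C :=
  csum (fun k => RtoC (Binomial.C n k) * RtoC (u ^ (n - k)) * y k) (S n).

Lemma W_ext n y y' u : (forall k, y k = y' k) -> W n y u = W n y' u.
Proof. intros H. unfold W. apply csum_ext. intros. rewrite H. auto. Qed.

Lemma W_plus n y y' u : W n (fun k => y k + y' k) u = W n y u + W n y' u.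
Proof. unfold W. rewrite <- csum_plus. apply csum_ext. intros. ring. Qed.

Lemma W_scal n c y u : W n (fun k => c * y k) u = c * W n y u.
Proof. unfold W. rewrite <- csum_scal. apply csum_ext. intros. ring. Qed.

Lemma W_delta n u : W n (fun k => if Nat.eqb k 0 then 1 else 0) u = RtoC (u ^ n).
Proof. unfold W. rewrite csum_first. rewrite (csum_zero _ n). simpl.
 rewrite Cbin_n_0. rewrite Nat.sub_0_r. ring. intros; simpl; ring. Qed.

Lemma W_0 y u : W 0 y u = y O.
Proof. unfold W. simpl. unfold Binomial.C. simpl. 
 replace (1 / (1 * 1))%R with 1%R by field. ring. Qed.

Lemma W_pascal n y u : W (S n) y u = RtoC u * W n y u + W n (fun k => y (S k)) u.
Proof.
 unfold W.
 rewrite (csum_first (fun k => RtoC (Binomial.C (S n) k) * RtoC (u ^ (S n - k)) * y k) (S n)).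
 rewrite (csum_first (fun k => RtoC (Binomial.C n k) * RtoC (u ^ (n - k)) * y k) n).
 change (csum (fun k : nat => RtoC (Binomial.C n k) * RtoC (u ^ (n - k)) * y (S k)) (S n))
  with (csum (fun k : nat => RtoC (Binomial.C n k) * RtoC (u ^ (n - k)) * y (S k)) n +
        RtoC (Binomial.C n n) * RtoC (u ^ (n - n)) * y (S n)).
 change (csum (fun k : nat => RtoC (Binomial.C (S n) (S k)) * RtoC (u ^ (S n - S k)) * y (S k)) (S n))
  with (csum (fun k : nat => RtoC (Binomial.C (S n) (S k)) * RtoC (u ^ (S n - S k)) * y (S k)) n +
        RtoC (Binomial.C (S n) (S n)) * RtoC (u ^ (S n - S n)) * y (S n)).
 rewrite !Cbin_n_0, !Cbin_n_n.
 rewrite Cmult_plus_distr_l, <- csum_scal.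
 assert (E : csum (fun k : nat => RtoC (Binomial.C (S n) (S k)) * RtoC (u ^ (S n - S k)) * y (S k)) n
   = csum (fun k : nat => RtoC u * (RtoC (Binomial.C n (S k)) * RtoC (u ^ (n - S k)) * y (S k))) n
   + csum (fun k : nat => RtoC (Binomial.C n k) * RtoC (u ^ (n - k)) * y (S k)) n).
 { rewrite <- csum_plus. apply csum_ext. intros k Hk.
   rewrite <- Binomial.pascal by lia. replace (S n - S k)%nat with (S (n - S k)) by lia.
   replace (n - k)%nat with (S (n - S k)) by lia. simpl.
   rewrite RtoC_plus, RtoC_mult. ring. }
 rewrite E. replace (S n - 0)%nat with (S n) by lia. rewrite Nat.sub_0_r, !Nat.sub_diag.
 simpl. rewrite !RtoC_mult. ring.
Qed.

Lemma W_B n y u : W n (fun k => RtoC (INR k) * y (pred k)) u = RtoC (INR n) * W (pred n) y u.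
Proof.
 revert y. induction n; intros y.
 - rewrite W_0. simpl. ring.
 - rewrite W_pascal. rewrite IHn.
   rewrite (W_ext n _ (fun k => y k + RtoC (INR k) * (fun j => y (S j)) (pred k))).
   2:{ intros k. destruct k; simpl pred. simpl INR. ring. rewrite S_INR, RtoC_plus. ring. }
   rewrite W_plus. rewrite (IHn (fun j => y (S j))). destruct n.
   + simpl. ring.
   + simpl pred. rewrite (W_pascal n y u). rewrite !S_INR, !RtoC_plus. ring.
Qed.

Definition CD (f : R -> C) (x : R) (l : C) : Prop :=
  derivable_pt_lim (fun t => fst (f t)) x (fst l) /\ derivable_pt_lim (fun t => snd (f t)) x (snd l).

Lemma Rd_plus f g x a b : derivable_pt_lim f x a -> derivable_pt_lim g x b ->
  derivable_pt_lim (fun t => f t + g t)%R x (a + b)%R.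
Proof. intros. apply (derivable_pt_lim_plus f g); auto. Qed.
Lemma Rd_minus f g x a b : derivable_pt_lim f x a -> derivable_pt_lim g x b ->
  derivable_pt_lim (fun t => f t - g t)%R x (a - b)%R.
Proof. intros. apply (derivable_pt_lim_minus f g); auto. Qed.
Lemma Rd_mult f g x a b : derivable_pt_lim f x a -> derivable_pt_lim g x b ->
  derivable_pt_lim (fun t => f t * g t)%R x (a * g x + f x * b)%R.
Proof. intros. apply (derivable_pt_lim_mult f g); auto. Qed.
Lemma Rd_const c x : derivable_pt_lim (fun _ => c) x 0%R.
Proof. apply (derivable_pt_lim_const c). Qed.
Lemma Rd_eq f x a b : derivable_pt_lim f x a -> a = b -> derivable_pt_lim f x b.
Proof. intros; subst; auto. Qed.
Lemma Rd_ext f g x a : (forall t, f t = g t) -> derivable_pt_lim f x a -> derivable_pt_lim g x a.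
Proof. intros H D. apply is_derive_Reals. apply is_derive_Reals in D. eapply is_derive_ext; eauto. Qed.
Lemma Rd_comp f g x a b : derivable_pt_lim g x a -> derivable_pt_lim f (g x) b ->
  derivable_pt_lim (fun t => f (g t)) x (b * a)%R.
Proof. intros. apply (derivable_pt_lim_comp g f); auto. Qed.

Lemma CD_eq f x l l' : CD f x l -> l = l' -> CD f x l'.
Proof. intros; subst; auto. Qed.
Lemma CD_ext f g x l : (forall t, f t = g t) -> CD f x l -> CD g x l.
Proof. intros H [D1 D2]. split; eapply Rd_ext; eauto; intros; simpl; rewrite H; auto. Qed.
Lemma CD_const c x : CD (fun _ => c) x (RtoC 0).
Proof. split; apply Rd_const. Qed.
Lemma CD_plus f g x a b : CD f x a -> CD g x b -> CD (fun t => f t + g t) x (a + b).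
Proof. intros [A1 A2] [B1 B2]. split; simpl; apply Rd_plus; auto. Qed.
Lemma CD_mult f g x a b : CD f x a -> CD g x b -> CD (fun t => f t * g t) x (a * g x + f x * b).
Proof. intros [A1 A2] [B1 B2]. split; simpl.
 - eapply Rd_eq. apply Rd_minus; apply Rd_mult; eauto. simpl. ring.
 - eapply Rd_eq. apply Rd_plus; apply Rd_mult; eauto. simpl. ring.
Qed.
Lemma CD_scal c f x a : CD f x a -> CD (fun t => c * f t) x (c * a).
Proof. intros H. eapply CD_eq. apply CD_mult. apply CD_const. apply H. cbv beta. ring. Qed.
Lemma CD_RtoC f x a : derivable_pt_lim f x a -> CD (fun t => RtoC (f t)) x (RtoC a).
Proof. intros H. split; simpl. auto. apply Rd_const. Qed.
Lemma CD_cexp f x a : CD f x a -> CD (fun t => Cexp' (f t)) x (a * Cexp' (f x)).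
Proof. intros [A1 A2]. unfold Cexp'. split; simpl.
 - eapply Rd_eq. apply Rd_mult. apply (Rd_comp exp (fun t => fst (f t))). eauto. apply derivable_pt_lim_exp.
   apply (Rd_comp cos (fun t => snd (f t))). eauto. apply derivable_pt_lim_cos. simpl. ring.
 - eapply Rd_eq. apply Rd_mult. apply (Rd_comp exp (fun t => fst (f t))). eauto. apply derivable_pt_lim_exp.
   apply (Rd_comp sin (fun t => snd (f t))). eauto. apply derivable_pt_lim_sin. simpl. ring.
Qed.
Lemma CD_comp (P P1 : R -> C) g x a : derivable_pt_lim g x a -> CD P (g x) (P1 (g x)) ->
  CD (fun t => P (g t)) x (RtoC a * P1 (g x)).
Proof. intros H [A1 A2]. split; simpl.
 - eapply Rd_eq. apply (Rd_comp (fun s => fst (P s)) g); eauto. ring.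
 - eapply Rd_eq. apply (Rd_comp (fun s => snd (P s)) g); eauto. ring.
Qed.
Lemma CD_unique f x a b : CD f x a -> CD f x b -> a = b.
Proof. intros [A1 A2] [B1 B2]. destruct a, b. simpl in *.
 f_equal; eapply uniqueness_limite; eauto. Qed.

Lemma D2_char f f1 f2 x : (forall t, CD f t (f1 t)) -> (forall t, CD f1 t (f2 t)) -> D2 f x = f2 x.
Proof. intros H1 H2. unfold D2. simpl.
 assert (E1 : forall t, Derive (fun t => fst (f t)) t = fst (f1 t)).
 { intros. apply is_derive_unique. apply is_derive_Reals. apply H1. }
 assert (E2 : forall t, Derive (fun t => snd (f t)) t = snd (f1 t)).
 { intros. apply is_derive_unique. apply is_derive_Reals. apply H1. }
 rewrite (Derive_ext (fun x0 => Derive (fun x1 => fst (f x1)) x0) _ x E1), (Derive_ext (fun x0 => Derive (fun x1 => snd (f x1)) x0) _ x E2).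
 destruct (f2 x) eqn:E. f_equal.
 - apply is_derive_unique. apply is_derive_Reals. replace r with (fst (f2 x)) by (rewrite E; auto). apply H2.
 - apply is_derive_unique. apply is_derive_Reals. replace r0 with (snd (f2 x)) by (rewrite E; auto). apply H2.
Qed.

Definition HasD2 (f g : R -> C) : Prop := exists f1, forall t, CD f t (f1 t) /\ CD f1 t (g t).

Lemma hop_char f g x : HasD2 f g -> hop f x = RtoC (1/2) * (- g x + RtoC (x * x) * f x).
Proof. intros [f1 H]. unfold hop. rewrite (D2_char f f1 g); auto; intros; apply H. Qed.

Lemma HasD2_ext f g f' g' : (forall t, f t = f' t) -> (forall t, g t = g' t) -> HasD2 f g -> HasD2 f' g'.
Proof. intros E1 E2 [f1 H]. exists f1. intros t. destruct (H t). split.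
 eapply CD_ext; eauto. rewrite <- E2. auto. Qed.
Lemma HasD2_plus f g f' g' : HasD2 f g -> HasD2 f' g' -> HasD2 (fun t => f t + f' t) (fun t => g t + g' t).
Proof. intros [f1 H] [f1' H']. exists (fun t => f1 t + f1' t). intros t. destruct (H t), (H' t).
 split; apply CD_plus; auto. Qed.
Lemma HasD2_scal c f g : HasD2 f g -> HasD2 (fun t => c * f t) (fun t => c * g t).
Proof. intros [f1 H]. exists (fun t => c * f1 t). intros t. destruct (H t). split; apply CD_scal; auto. Qed.
Lemma HasD2_zero : HasD2 (fun _ => RtoC 0) (fun _ => RtoC 0).
Proof. exists (fun _ => RtoC 0). intros; split; apply CD_const. Qed.
Lemma HasD2_Csum {A} (l : list A) (F G : A -> R -> C) : (forall p, In p l -> HasD2 (F p) (G p)) ->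
  HasD2 (fun x => Csum (map (fun p => F p x) l)) (fun x => Csum (map (fun p => G p x) l)).
Proof. induction l; intros H. apply HasD2_zero.
 simpl. unfold Csum in *. simpl. apply (HasD2_plus (F a) (G a)). apply H; simpl; auto.
 apply IHl. intros; apply H; simpl; auto. Qed.

Ltac genC :=
  repeat match goal with
  | |- context [?t] =>
    let T := type of t in constr_eq T C;
    lazymatch t with
    | Cplus _ _ => fail | Cmult _ _ => fail | Copp _ => fail | Cminus _ _ => fail
    | RtoC _ => fail | Ci => fail | (_, _) => fail
    | _ => let a := fresh "a" in let b := fresh "b" in generalize t; intros [a b]
    end
  end.
Ltac Cring := cbv beta; genC; apply injective_projections; simpl; ring.
Ltac Cfield := cbv beta; genC; apply injective_projections; simpl; field.

Lemma Rd_sq x : derivable_pt_lim (fun t => t * t)%R x (2 * x)%R.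
Proof. eapply Rd_eq. apply (Rd_mult (fun t => t) (fun t => t)); apply derivable_pt_lim_id. ring. Qed.
Lemma Rd_id x : derivable_pt_lim (fun t => t) x 1%R.
Proof. apply derivable_pt_lim_id. Qed.

Lemma CD_xi z x : CD (xi z) x (Ci * z * RtoC x * xi z x).
Proof.
 unfold xi. eapply CD_eq. apply CD_cexp.
 apply (CD_ext (fun t => (Ci * z / RtoC 2) * RtoC (t * t))).
 { intros. unfold Cdiv. ring. }
 apply CD_scal. apply CD_RtoC. apply Rd_sq.
 unfold Cdiv. replace (/ RtoC 2) with (RtoC (/ 2)). Cfield. rewrite RtoC_inv by lra. reflexivity.
Qed.

Section HopFormula.
Variables (P P1 P2 : R -> C) (z : C).
Hypothesis HP : forall u, CD P u (P1 u).
Hypothesis HP1 : forall u, CD P1 u (P2 u).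

Definition Qe (e : nat) (x : R) : C :=
  RtoC (2 + 4 * INR e) * P1 (x * x) + RtoC 4 * RtoC (x * x) * P2 (x * x)
  + Ci * z * RtoC (1 + 2 * INR e) * P (x * x) + RtoC 4 * Ci * z * RtoC (x * x) * P1 (x * x)
  + (Ci * z) * (Ci * z) * RtoC (x * x) * P (x * x).

Lemma CD_Pc (Q Q1 : R -> C) (HQ : forall u, CD Q u (Q1 u)) x :
  CD (fun t => Q (t * t)%R) x (RtoC 2 * RtoC x * Q1 (x * x)%R).
Proof. eapply CD_eq. apply CD_comp. apply Rd_sq. apply HQ. Cring. Qed.

Lemma hopD2_0 : HasD2 (fun x => P (x * x) * xi z x) (fun x => Qe 0 x * xi z x).
Proof.
 exists (fun t => (RtoC 2 * RtoC t * P1 (t * t) + Ci * z * RtoC t * P (t * t)) * xi z t).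
 intros t. split.
 - eapply CD_eq. apply CD_mult. apply CD_Pc. apply HP. apply CD_xi. Cring.
 - eapply CD_eq. apply CD_mult. apply CD_plus. apply CD_mult. apply CD_scal. apply CD_RtoC. apply Rd_id.
   apply CD_Pc. apply HP1. apply CD_mult. apply CD_scal. apply CD_RtoC. apply Rd_id.
   apply CD_Pc. apply HP. apply CD_xi. unfold Qe. simpl INR. Cring.
Qed.

Lemma hopD2_1 : HasD2 (fun x => RtoC x * P (x * x) * xi z x) (fun x => RtoC x * Qe 1 x * xi z x).
Proof.
 exists (fun t => (P (t * t) + RtoC 2 * RtoC (t * t) * P1 (t * t) + Ci * z * RtoC (t * t) * P (t * t)) * xi z t).
 intros t. split.
 - eapply CD_eq. apply CD_mult. apply CD_mult. apply CD_RtoC. apply Rd_id. apply CD_Pc. apply HP. apply CD_xi. Cring.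
 - eapply CD_eq. apply CD_mult. apply CD_plus. apply CD_plus.
   apply CD_Pc. apply HP. apply CD_mult. apply CD_scal. apply CD_RtoC. apply Rd_sq.
   apply CD_Pc. apply HP1. apply CD_mult. apply CD_scal. apply CD_RtoC. apply Rd_sq.
   apply CD_Pc. apply HP. apply CD_xi. unfold Qe. simpl INR. Cring.
Qed.

End HopFormula.

Lemma Cder_line (F : C -> C) x0 y0 l : CD (fun t => F (t, y0)) x0 l -> C_derive F (x0, y0) = l.
Proof.
 intros [D1 D2]. unfold C_derive, C_lim. simpl fst; simpl snd. destruct l as [l1 l2]. simpl in D1, D2.
 assert (K : forall (g : R -> R) (f : R -> R) l, derivable_pt_lim f x0 l ->
   (forall y, y <> x0 -> g y = (f y - f x0) / (y - x0))%R -> real (Lim g x0) = l).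
 { intros g f l Df Eg. replace l with (real (Finite l)) by auto. f_equal. apply is_lim_unique.
   apply is_lim_spec. intros eps. destruct (Df eps (cond_pos eps)) as [delta Hd].
   exists delta. intros y Hy Hne. change R in y. unfold ball in Hy; simpl in Hy. unfold AbsRing_ball in Hy. simpl in Hy.
   unfold abs, minus, plus, opp in Hy; simpl in Hy.
   rewrite Eg by auto. specialize (Hd (y - x0)%R). replace (x0 + (y - x0))%R with y in Hd by ring.
   apply Hd. lra. exact Hy. }
 f_equal.
 - apply (K _ (fun t => fst (F (t, y0)))); auto. intros y Hy. simpl. field.
   split; [lra | nra].
 - apply (K _ (fun t => snd (F (t, y0)))); auto. intros y Hy. simpl. field.
   split; [lra | nra].
Qed.


Lemma CD_inv f x d : CD f x d -> f x <> RtoC 0 -> CD (fun t => / f t) x (- d * / (f x * f x)).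
Proof.
 intros [D1 D2] Hne. destruct (f x) as [a b] eqn:Ef.
 assert (Hn : (a * a + b * b)%R <> 0%R).
 { intros H. apply Hne. assert (a = 0%R) by nra. assert (b = 0%R) by nra. subst. reflexivity. }
 assert (Den : derivable_pt_lim (fun t => fst (f t) ^ 2 + snd (f t) ^ 2)%R x (2 * a * fst d + 2 * b * snd d)%R).
 { eapply Rd_eq. apply Rd_plus.
   apply (Rd_comp (fun s => s ^ 2)%R (fun t => fst (f t))); [exact D1 | apply derivable_pt_lim_pow].
   apply (Rd_comp (fun s => s ^ 2)%R (fun t => snd (f t))); [exact D2 | apply derivable_pt_lim_pow].
   rewrite Ef. simpl. ring. }
 split; simpl.
 - eapply Rd_eq. apply (derivable_pt_lim_div (fun t => fst (f t)) (fun t => fst (f t) ^ 2 + snd (f t) ^ 2)%R); eauto.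
   rewrite Ef; simpl. intros H. apply Hn. nra.
   rewrite Ef. simpl. destruct d as [d1 d2]. simpl. unfold Rsqr. field. split; auto. nra.
 - eapply Rd_eq. apply (derivable_pt_lim_div (fun t => - snd (f t))%R (fun t => fst (f t) ^ 2 + snd (f t) ^ 2)%R); eauto.
   apply (derivable_pt_lim_opp (fun t => snd (f t))). exact D2.
   rewrite Ef; simpl. intros H. apply Hn. nra.
   rewrite Ef. simpl. destruct d as [d1 d2]. simpl. unfold Rsqr. field. split; auto. nra.
Qed.

Lemma CD_ext_loc f g x l : locally x (fun t => f t = g t) -> CD f x l -> CD g x l.
Proof. intros H [D1 D2]. split; apply is_derive_Reals; [apply is_derive_Reals in D1 | apply is_derive_Reals in D2];
 eapply is_derive_ext_loc; eauto; eapply filter_imp; eauto; intros t E; simpl; rewrite E; auto. Qed.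

Lemma loc_ne (w a : R) : w <> a -> locally w (fun y => y <> a).
Proof. intros H. apply locally_not. intros H1. apply H. apply eq_close. intros eps.
 apply Classical_Prop.NNPP. intros H2. apply (H1 eps). intros y Hy Ha. subst. auto. Qed.

Definition gfun : C -> C := fun w => (RtoC 2 * Ci) / (RtoC 1 + w * w).

Section Lrel.
Variable y0 : R.
Definition pt (x : R) : C := (x, y0).
Definition gam m x := Cder_n m gfun (pt x).
Definition Ul x := RtoC 1 + pt x * pt x <> RtoC 0.

Lemma Ul_iff x : Ul x <-> (x <> 0%R \/ (y0 * y0 <> 1)%R).
Proof. unfold Ul, pt. split.
 - intros H. destruct (Req_dec x 0); [right|left; auto]. intros E. apply H. subst.
   apply injective_projections; simpl; nra.
 - intros H E. injection E. intros E2 E1. destruct H as [H|H].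
   + apply H. nra.
   + assert (x = 0%R \/ y0 = 0%R) as [->| ->] by (apply Rmult_integral; nra); nra.
Qed.

Lemma Ul_loc x : Ul x -> locally x Ul.
Proof. intros H. apply Ul_iff in H. destruct (Req_dec (y0 * y0) 1) as [E|E].
 - destruct H as [H|H]; [|contradiction]. eapply filter_imp. 2: apply (loc_ne x 0%R H).
   intros t Ht. apply Ul_iff. auto.
 - apply filter_forall. intros t. apply Ul_iff. auto.
Qed.

Lemma CD_pt x : CD pt x (RtoC 1).
Proof. split; simpl. apply derivable_pt_lim_id. apply Rd_const. Qed.

Lemma gam_S m x l : CD (gam m) x l -> gam (S m) x = l.
Proof. intros H. unfold gam, pt. simpl. apply Cder_line. exact H. Qed.

Definition Rel m x := (RtoC 1 + pt x * pt x) * gam (S m) x + RtoC (2 * INR (S m)) * pt x * gam m x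
   + RtoC (INR (S m) * INR m) * gam (pred m) x = RtoC 0.

Definition Q m := forall x, Ul x -> CD (gam m) x (gam (S m) x) /\ Rel m x.

Lemma CD_D x : CD (fun t => RtoC 1 + pt t * pt t) x (RtoC 0 + (RtoC 1 * pt x + pt x * RtoC 1)).
Proof. apply CD_plus. apply CD_const. apply CD_mult; apply CD_pt. Qed.

Lemma Q0 : Q 0.
Proof.
 intros x Hx.
 assert (D : CD (gam 0) x ((RtoC 2 * Ci) * (- (RtoC 0 + (RtoC 1 * pt x + pt x * RtoC 1)) *
             / ((RtoC 1 + pt x * pt x) * (RtoC 1 + pt x * pt x))))).
 { apply (CD_ext (fun t => (RtoC 2 * Ci) * / (RtoC 1 + pt t * pt t))). reflexivity.
   apply CD_scal. apply CD_inv. apply CD_D. exact Hx. }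
 split. rewrite (gam_S 0 x _ D). exact D.
 unfold Rel. rewrite (gam_S 0 x _ D). unfold gam, Cder_n, gfun. simpl pred. simpl INR.
 unfold Cdiv. rewrite !RtoC_mult. field. exact Hx.
Qed.

Lemma Qstep m : Q m -> Q (pred m) -> Q (S m).
Proof.
 intros Qm Qp x Hx.
 set (c1 := RtoC (2 * INR (S m))). set (c2 := RtoC (INR (S m) * INR m)).
 set (F := fun t => (- RtoC 1) * ((c1 * pt t * gam m t + c2 * gam (pred m) t) * / (RtoC 1 + pt t * pt t))).
 assert (EF : forall t, Ul t -> F t = gam (S m) t).
 { intros t Ht. destruct (Qm t Ht) as [_ Rt]. unfold Rel in Rt. fold c1 c2 in Rt. unfold F.
   transitivity (((RtoC 1 + pt t * pt t) * gam (S m) t + c1 * pt t * gam m t + c2 * gam (pred m) t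
     - (RtoC 1 + pt t * pt t) * gam (S m) t) * (- RtoC 1) * / (RtoC 1 + pt t * pt t)).
   field. exact Ht.
   rewrite Rt. field. exact Ht. }
 destruct (Qm x Hx) as [Dm Rm]. destruct (Qp x Hx) as [Dp _].
 assert (DF : exists dF, CD F x dF).
 { eexists. apply CD_scal. apply CD_mult. apply CD_plus. apply CD_mult. apply CD_scal. apply CD_pt.
   exact Dm. apply CD_scal. exact Dp. apply CD_inv. apply CD_D. exact Hx. }
 destruct DF as [dF DF].
 assert (DS : CD (gam (S m)) x dF).
 { eapply CD_ext_loc. 2: exact DF. eapply filter_imp. 2: apply (Ul_loc x Hx). intros t Ht. apply EF; auto. }
 assert (DS' : CD (gam (S m)) x (gam (S (S m)) x)) by (rewrite (gam_S (S m) x dF DS); exact DS).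
 split. exact DS'.
 assert (DE : CD (fun t => (RtoC 1 + pt t * pt t) * gam (S m) t + c1 * pt t * gam m t + c2 * gam (pred m) t) x
   ((RtoC 0 + (RtoC 1 * pt x + pt x * RtoC 1)) * gam (S m) x + (RtoC 1 + pt x * pt x) * gam (S (S m)) x
    + ((c1 * RtoC 1) * gam m x + c1 * pt x * gam (S m) x) + c2 * gam (S (pred m)) x)).
 { apply CD_plus. apply CD_plus. apply CD_mult. apply CD_D. exact DS'. apply CD_mult. apply CD_scal. apply CD_pt.
   exact Dm. apply CD_scal. exact Dp. }
 assert (DE0 : CD (fun t => (RtoC 1 + pt t * pt t) * gam (S m) t + c1 * pt t * gam m t + c2 * gam (pred m) t) x (RtoC 0)).
 { eapply CD_ext_loc. 2: apply (CD_const (RtoC 0)). eapply filter_imp. 2: apply (Ul_loc x Hx).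
   intros t Ht. destruct (Qm t Ht) as [_ Rt]. unfold Rel in Rt. fold c1 c2 in Rt. cbv beta. rewrite Rt. reflexivity. }
 pose proof (CD_unique _ _ _ _ DE DE0) as Z.
 unfold Rel. rewrite <- Z. unfold c1, c2. destruct m as [|j].
 - simpl pred. simpl INR. rewrite !RtoC_mult, !RtoC_plus. ring.
 - simpl pred. rewrite !S_INR, !RtoC_mult, !RtoC_plus. ring.
Qed.

Lemma Qall m : Q m /\ Q (pred m).
Proof. induction m. split; apply Q0. destruct IHm as [A B]. split. apply Qstep; auto. exact A. Qed.

End Lrel.

Lemma L_rel0 z : RtoC 1 + z * z <> RtoC 0 -> (RtoC 1 + z * z) * Lk 1 z = RtoC 2 * Ci.
Proof. intros H. simpl. unfold Cdiv. field. exact H. Qed.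

Lemma L_rel z m : RtoC 1 + z * z <> RtoC 0 ->
  (RtoC 1 + z * z) * Lk (S (S m)) z + RtoC (2 * INR (S m)) * z * Lk (S m) z
   + RtoC (INR (S m) * INR m) * Lk (S (pred m)) z = RtoC 0.
Proof. intros H. destruct z as [x y0]. destruct (Qall y0 m) as [Qm _].
 destruct (Qm x H) as [_ R]. exact R. Qed.


Lemma Cpow_RtoC s n : Cpow (RtoC s) n = RtoC (s ^ n).
Proof. induction n; simpl. auto. rewrite IHn, RtoC_mult. auto. Qed.

Lemma W_deriv n : forall y u, CD (W n y) u (RtoC (INR n) * W (pred n) y u).
Proof.
 induction n; intros y u.
 - apply (CD_ext (fun _ => y O)). intros t. rewrite W_0. auto. eapply CD_eq. apply CD_const. simpl. ring.
 - apply (CD_ext (fun t => RtoC t * W n y t + W n (fun k => y (S k)) t)). intros t. rewrite W_pascal. auto.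
   eapply CD_eq. apply CD_plus. apply CD_mult. apply CD_RtoC. apply Rd_id. apply IHn. apply IHn.
   destruct n.
   + simpl. rewrite !W_0. ring.
   + simpl pred. rewrite (W_pascal n y u). rewrite !S_INR, !RtoC_plus. ring.
Qed.

Lemma hopD2_e P P1 P2 z e (HP : forall u, CD P u (P1 u)) (HP1 : forall u, CD P1 u (P2 u)) :
  (e = 0 \/ e = 1)%nat ->
  HasD2 (fun x => RtoC (x ^ e) * P (x * x)%R * xi z x) (fun x => RtoC (x ^ e) * Qe P P1 P2 z e x * xi z x).
Proof.
 intros [-> | ->].
 - eapply HasD2_ext. 3: apply (hopD2_0 P P1 P2 z HP HP1). intros; simpl; ring. intros; simpl; ring.
 - eapply HasD2_ext. 3: apply (hopD2_1 P P1 P2 z HP HP1). intros; simpl; rewrite Rmult_1_r; ring.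
   intros; simpl; rewrite Rmult_1_r; ring.
Qed.

Definition Y (z : C) (k : nat) : C := Cpow (- (RtoC 2 * Ci)) k * Lk k z.

Lemma tL_W n x z : tL n x z = W n (Y z) (x * x).
Proof. unfold tL, W. rewrite Csum_map_seq. apply csum_ext. intros k Hk. simpl.
 replace (n - k + (n - k + 0))%nat with (2 * (n - k))%nat by lia. rewrite pow_mult. simpl (x ^ 2)%R. rewrite Rmult_1_r. unfold Y. ring. Qed.

Lemma Yrel z k : RtoC 1 + z * z <> RtoC 0 ->
  (RtoC 1 + z * z) * Y z (S k) = RtoC 4 * (if Nat.eqb k 0 then RtoC 1 else RtoC 0)
   + RtoC 4 * Ci * z * (RtoC (INR k) * Y z (S (pred k)))
   + RtoC 4 * (RtoC (INR k) * (RtoC (INR (pred k)) * Y z (S (pred (pred k))))).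
Proof.
 intros H. unfold Y. destruct k as [|j].
 - simpl Nat.eqb. simpl INR. simpl pred.
   transitivity (Cpow (- (RtoC 2 * Ci)) 1 * ((RtoC 1 + z * z) * Lk 1 z)). ring.
   rewrite L_rel0 by auto. simpl. Cring.
 - pose proof (L_rel z j H) as R.
   assert (E : (RtoC 1 + z * z) * Lk (S (S j)) z =
     - (RtoC (2 * INR (S j)) * z * Lk (S j) z + RtoC (INR (S j) * INR j) * Lk (S (pred j)) z)).
   { transitivity ((RtoC 1 + z * z) * Lk (S (S j)) z + RtoC (2 * INR (S j)) * z * Lk (S j) z +
       RtoC (INR (S j) * INR j) * Lk (S (pred j)) z
       - (RtoC (2 * INR (S j)) * z * Lk (S j) z + RtoC (INR (S j) * INR j) * Lk (S (pred j)) z)).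
     ring. rewrite R. ring. }
   transitivity (Cpow (- (RtoC 2 * Ci)) (S (S j)) * ((RtoC 1 + z * z) * Lk (S (S j)) z)). ring.
   rewrite E. simpl Nat.eqb. destruct j as [|i].
   + simpl pred. simpl INR. simpl Cpow. Cring.
   + simpl pred. simpl Cpow. rewrite !S_INR. Cring.
Qed.

Lemma W_rel z n u : RtoC 1 + z * z <> RtoC 0 ->
 (RtoC 1 + z * z) * W n (fun k => Y z (S k)) u = RtoC 4 * RtoC (u ^ n)
 + RtoC 4 * Ci * z * (RtoC (INR n) * W (pred n) (fun k => Y z (S k)) u)
 + RtoC 4 * (RtoC (INR n) * (RtoC (INR (pred n)) * W (pred (pred n)) (fun k => Y z (S k)) u)).
Proof.
 intros H. set (Y' := fun k => Y z (S k)).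
 rewrite <- W_scal.
 rewrite (W_ext n _ (fun k => (RtoC 4 * (if Nat.eqb k 0 then RtoC 1 else RtoC 0)
    + RtoC 4 * Ci * z * (RtoC (INR k) * Y' (pred k)))
    + RtoC 4 * (RtoC (INR k) * (fun j => RtoC (INR j) * Y' (pred j)) (pred k)))).
 2:{ intros k. unfold Y'. cbv beta. rewrite (Yrel z k H). reflexivity. }
 rewrite !W_plus, !W_scal. rewrite W_delta.
 rewrite (W_B n Y' u).
 rewrite (W_B n (fun j => RtoC (INR j) * Y' (pred j)) u).
 rewrite (W_B (pred n) Y' u). ring.
Qed.

Lemma lincomb (E1 E2 A B c : C) : A = B -> E1 = E2 + c * (A - B) -> E1 = E2.
Proof. intros H1 H2. rewrite H2, H1. ring. Qed.

Definition P1n z n := fun v => RtoC (INR n) * W (pred n) (Y z) v.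
Definition P2n z n := fun v => RtoC (INR n) * (RtoC (INR (pred n)) * W (pred (pred n)) (Y z) v).

Lemma hop_tL_id z e n x : RtoC 1 + z * z <> RtoC 0 ->
 RtoC (1/2) * (- (RtoC (x ^ e) * Qe (W n (Y z)) (P1n z n) (P2n z n) z e x * xi z x)
    + RtoC (x * x) * (RtoC (x ^ e) * W n (Y z) (x * x) * xi z x))
 - RtoC (x ^ e) * xi z x * (RtoC (1/2) * ((RtoC 1 + z * z) * W (S n) (Y z) (x * x)
     - Ci * z * RtoC (1 + 2 * INR e + 4 * INR n) * W n (Y z) (x * x)
     - RtoC (2 * INR n * (2 * INR n - 1 + 2 * INR e)) * W (pred n) (Y z) (x * x)))
 = - RtoC 2 * (RtoC (x ^ e) * RtoC ((x * x) ^ n) * xi z x).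
Proof.
 intros H. unfold Qe, P1n, P2n. set (u := (x * x)%R).
 apply (lincomb _ _ _ _ (- (RtoC (1/2) * RtoC (x ^ e) * xi z x)) (W_rel z n u H)).
 rewrite (W_pascal n (Y z) u).
 destruct n as [|[|j]].
 - simpl pred. simpl INR. Cfield.
 - simpl pred. rewrite (W_pascal 0 (Y z) u). simpl INR. Cfield.
 - simpl pred. rewrite (W_pascal (S j) (Y z) u). rewrite (W_pascal j (Y z) u). rewrite !S_INR. Cfield.
Qed.

Definition Pm m := fun v : R => RtoC (v ^ m).
Definition P1m m := fun v : R => RtoC (INR m) * RtoC (v ^ (pred m)).
Definition P2m m := fun v : R => RtoC (INR m) * (RtoC (INR (pred m)) * RtoC (v ^ (pred (pred m)))).

Lemma CD_Pm m v : CD (Pm m) v (P1m m v).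
Proof. eapply CD_eq. apply CD_RtoC. apply derivable_pt_lim_pow. unfold P1m. rewrite RtoC_mult. auto. Qed.
Lemma CD_P1m m v : CD (P1m m) v (P2m m v).
Proof. unfold P1m, P2m. apply CD_scal. apply CD_Pm. Qed.

Lemma hop_mono_id z e m x :
 RtoC (1/2) * (- (RtoC (x ^ e) * Qe (Pm m) (P1m m) (P2m m) z e x * xi z x)
    + RtoC (x * x) * (RtoC (x ^ e) * Pm m (x * x) * xi z x))
 = RtoC (x ^ e) * xi z x * (RtoC (1/2) * ((RtoC 1 + z * z) * RtoC ((x * x) ^ (S m))
     - Ci * z * RtoC (1 + 2 * INR e + 4 * INR m) * RtoC ((x * x) ^ m)
     - RtoC (2 * INR m * (2 * INR m - 1 + 2 * INR e)) * RtoC ((x * x) ^ (pred m)))).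
Proof.
 unfold Qe, Pm, P1m, P2m. destruct m as [|[|j]].
 - simpl pred. simpl INR. Cfield.
 - simpl pred. simpl INR. Cfield.
 - simpl pred. rewrite !S_INR. Cfield.
Qed.

Lemma csum_minus (f g : nat -> C) n : csum (fun k => f k - g k) n = csum f n - csum g n.
Proof. induction n; simpl. ring. rewrite IHn. ring. Qed.


Lemma HasD2_csum (F G : nat -> R -> C) N : (forall n, HasD2 (F n) (G n)) ->
  HasD2 (fun x => csum (fun n => F n x) N) (fun x => csum (fun n => G n x) N).
Proof. intros H. induction N; simpl. apply HasD2_zero. apply (HasD2_plus _ _ (F N) (G N)); auto. Qed.

Lemma hop_ext f g x : (forall t, f t = g t) -> hop f x = hop g x.
Proof. intros H. replace f with g. auto. symmetry. apply functional_extensionality. auto. Qed.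

Lemma hop_csum (F G : nat -> R -> C) N x : (forall n, HasD2 (F n) (G n)) ->
  hop (fun x => csum (fun n => F n x) N) x = csum (fun n => hop (F n) x) N.
Proof. intros H. rewrite (hop_char _ _ x (HasD2_csum F G N H)).
 rewrite (csum_ext (fun n => hop (F n) x) (fun n => RtoC (1/2) * (- G n x + RtoC (x * x) * F n x))).
 2:{ intros. apply hop_char. auto. }
 clear H. induction N; simpl. ring. rewrite <- IHN. ring. Qed.

Lemma hop_Csum {A} (l : list A) (F G : A -> R -> C) x : (forall p, HasD2 (F p) (G p)) ->
  hop (fun x => Csum (map (fun p => F p x) l)) x = Csum (map (fun p => hop (F p) x) l).
Proof. intros H. rewrite (hop_char _ _ x (HasD2_Csum l F G (fun p _ => H p))).
 rewrite (map_ext (fun p => hop (F p) x) (fun p => RtoC (1/2) * (- G p x + RtoC (x * x) * F p x))).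
 2:{ intros. apply hop_char. auto. }
 clear H. induction l; unfold Csum in *; simpl. ring. rewrite <- IHl. ring. Qed.

Lemma hop_scal c f g x : HasD2 f g -> hop (fun t => c * f t) x = c * hop f x.
Proof. intros H. rewrite (hop_char _ _ x (HasD2_scal c f g H)). rewrite (hop_char _ _ x H). ring. Qed.

Definition Lin (rho : list C) (F : nat -> C) : C :=
  Csum (map (fun n => nth n rho (RtoC 0) * F n) (seq 0 (length rho))).

Lemma Lin_csum rho F : Lin rho F = csum (fun n => nth n rho (RtoC 0) * F n) (length rho).
Proof. unfold Lin. rewrite Csum_map_seq. auto. Qed.

Lemma peval_Lin rho s : peval rho s = Lin rho (Cpow s).
Proof. reflexivity. Qed.
Lemma rhotL_Lin rho x z : rhotL rho x z = Lin rho (fun n => tL n x z).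
Proof. reflexivity. Qed.

Definition mono (a : C) (m : nat) : list C := repeat (RtoC 0) m ++ [a].

Lemma Lin_mono a m F : Lin (mono a m) F = a * F m.
Proof. rewrite Lin_csum. unfold mono. rewrite length_app, repeat_length. simpl length.
 replace (m + 1)%nat with (S m) by lia. simpl.
 rewrite csum_zero. rewrite app_nth2; rewrite repeat_length; auto. rewrite Nat.sub_diag. simpl. ring.
 intros k Hk. rewrite app_nth1 by (rewrite repeat_length; auto). rewrite nth_repeat. ring. Qed.

Section Terms.
Variable e : nat.

Definition fT (p : list C * C) (x : R) : C := peval (fst p) (RtoC (x * x)) * RtoC (x ^ e) * xi (snd p) x.
Definition sT (p : list C * C) (x : R) : C := Ci / RtoC 2 * rhotL (fst p) x (snd p) * RtoC (x ^ e) * xi (snd p) x.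
Definition NF r x := Csum (map (fun p => fT p x) r).
Definition SF r x := Csum (map (fun p => sT p x) r).

Definition Mfun n z x := RtoC (x ^ e) * Pm n (x * x) * xi z x.
Definition Sfun n z x := RtoC (x ^ e) * W n (Y z) (x * x) * xi z x.

Lemma fT_csum p x : fT p x = csum (fun n => nth n (fst p) (RtoC 0) * Mfun n (snd p) x) (length (fst p)).
Proof. unfold fT. unfold peval. fold (Lin (fst p) (Cpow (RtoC (x * x)))). rewrite Lin_csum.
 rewrite !csum_mul_r. apply csum_ext. intros. unfold Mfun, Pm. rewrite Cpow_RtoC. ring. Qed.

Lemma sT_csum p x : sT p x = csum (fun n => Ci / RtoC 2 * nth n (fst p) (RtoC 0) * Sfun n (snd p) x) (length (fst p)).
Proof. unfold sT. unfold rhotL. fold (Lin (fst p) (fun n => tL n x (snd p))). rewrite Lin_csum.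
 rewrite <- csum_scal. rewrite !csum_mul_r. apply csum_ext. intros. unfold Sfun. rewrite tL_W. ring. Qed.

Hypothesis He : (e = 0 \/ e = 1)%nat.

Lemma HasD2_M n z : HasD2 (Mfun n z) (fun x => RtoC (x ^ e) * Qe (Pm n) (P1m n) (P2m n) z e x * xi z x).
Proof. apply hopD2_e; auto. apply CD_Pm. apply CD_P1m. Qed.

Lemma HasD2_S n z : HasD2 (Sfun n z) (fun x => RtoC (x ^ e) * Qe (W n (Y z)) (P1n z n) (P2n z n) z e x * xi z x).
Proof. apply hopD2_e; auto. intros u. apply W_deriv. intros u. unfold P1n, P2n. apply CD_scal. apply W_deriv. Qed.

Definition three (z : C) (c : C) (n : nat) : list (list C * C) :=
  [ (mono (c * (RtoC (1/2) * (RtoC 1 + z * z))) (S n), z);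
    (mono (c * (RtoC (1/2) * (- (Ci * z * RtoC (1 + 2 * INR e + 4 * INR n))))) n, z);
    (mono (c * (RtoC (1/2) * (- RtoC (2 * INR n * (2 * INR n - 1 + 2 * INR e))))) (pred n), z) ].

Definition rpp (p : list C * C) : list (list C * C) :=
  flat_map (fun n => three (snd p) (nth n (fst p) (RtoC 0)) n) (seq 0 (length (fst p))).

Definition rr (r : list (list C * C)) := flat_map rpp r.

Lemma Csum_flat_map {A B} (F : B -> C) (g : A -> list B) l :
  Csum (map F (flat_map g l)) = Csum (map (fun a => Csum (map F (g a))) l).
Proof. induction l; simpl. auto. rewrite map_app, Csum_app, IHl. unfold Csum at 3. simpl. auto. Qed.

Lemma hop_fT p x : hop (fT p) x = Csum (map (fun q => fT q x) (rpp p)).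
Proof.
 rewrite (hop_ext _ (fun x => csum (fun n => nth n (fst p) (RtoC 0) * Mfun n (snd p) x) (length (fst p)))).
 2: apply fT_csum.
 rewrite (hop_csum _ (fun n x => nth n (fst p) (RtoC 0) * (RtoC (x ^ e) * Qe (Pm n) (P1m n) (P2m n) (snd p) e x * xi (snd p) x))).
 2:{ intros n. apply HasD2_scal. apply HasD2_M. }
 unfold rpp. rewrite Csum_flat_map, Csum_map_seq. apply csum_ext. intros n Hn. simpl plus.
 rewrite (hop_scal _ _ _ x (HasD2_M n (snd p))). rewrite (hop_char _ _ x (HasD2_M n (snd p))).
 unfold Mfun. rewrite hop_mono_id.
 unfold three, Csum. simpl. unfold fT. simpl fst; simpl snd. rewrite !peval_Lin.
 rewrite !Lin_mono, !Cpow_RtoC. Cring.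
Qed.

Lemma hop_sT p x : RtoC 1 + snd p * snd p <> RtoC 0 ->
  hop (sT p) x - Csum (map (fun q => sT q x) (rpp p)) = - Ci * fT p x.
Proof.
 intros Hz.
 rewrite (hop_ext _ (fun x => csum (fun n => Ci / RtoC 2 * nth n (fst p) (RtoC 0) * Sfun n (snd p) x) (length (fst p)))).
 2: apply sT_csum.
 rewrite (hop_csum _ (fun n x => Ci / RtoC 2 * nth n (fst p) (RtoC 0) * (RtoC (x ^ e) * Qe (W n (Y (snd p))) (P1n (snd p) n) (P2n (snd p) n) (snd p) e x * xi (snd p) x))).
 2:{ intros n. apply HasD2_scal. apply HasD2_S. }
 unfold rpp. rewrite Csum_flat_map, Csum_map_seq. rewrite fT_csum. rewrite <- csum_scal, <- csum_minus.
 apply csum_ext. intros n Hn. simpl plus.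
 rewrite (hop_scal _ _ _ x (HasD2_S n (snd p))). rewrite (hop_char _ _ x (HasD2_S n (snd p))).
 unfold three, Csum. simpl. unfold sT. simpl fst; simpl snd. rewrite !rhotL_Lin, !Lin_mono, !tL_W.
 apply (lincomb _ _ _ _ (Ci / RtoC 2 * nth n (fst p) (RtoC 0)) (hop_tL_id (snd p) e n x Hz)).
 unfold Sfun, Mfun, Pm. replace (Ci / RtoC 2) with (Ci * RtoC (/ 2)) by (unfold Cdiv; rewrite RtoC_inv by lra; reflexivity). Cfield.
Qed.
End Terms.

Definition ex (z : C) (s : R) : C := Cexp' (Ci * z * RtoC s / RtoC 2).
Definition az (z : C) : C := Ci * z * / RtoC 2.

Lemma CD_ex z s : CD (ex z) s (az z * ex z s).
Proof. unfold ex. eapply CD_eq. apply CD_cexp.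
 apply (CD_ext (fun t => az z * RtoC t)). intros; unfold az, Cdiv; ring.
 apply CD_scal. apply CD_RtoC. apply derivable_pt_lim_id. cbv beta. ring. Qed.

Lemma ex_nz z s : ex z s <> RtoC 0.
Proof. unfold ex, Cexp'. destruct (Ci * z * RtoC s / RtoC 2) as [a b]. simpl. intros H. injection H. intros H2 H1.
 pose proof (exp_pos a) as Ep. pose proof (sin2_cos2 b) as SC. unfold Rsqr in *.
 assert (Hc : cos b = 0%R). { apply Rmult_eq_reg_l with (exp a); lra. }
 assert (Hs : sin b = 0%R). { apply Rmult_eq_reg_l with (exp a); lra. }
 rewrite Hc, Hs in SC. lra. Qed.

Definition PV (M : nat) (q : nat -> C) (s : R) : C := csum (fun n => q n * RtoC (s ^ n)) M.
Definition supp (M : nat) (q : nat -> C) := forall n, (M <= n)%nat -> q n = RtoC 0.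
Definition Dq (q : nat -> C) (n : nat) : C := RtoC (INR (S n)) * q (S n).
Definition T (c : C) (q : nat -> C) (n : nat) : C := Dq q n + c * q n.
Fixpoint Tit (K : nat) (c : C) (q : nat -> C) : nat -> C :=
  match K with O => q | S K' => T c (Tit K' c q) end.

Lemma CD_PV M : forall q s, CD (PV (S M) q) s (PV M (Dq q) s).
Proof. induction M; intros q s.
 - eapply CD_ext. 2: apply (CD_const (q O * RtoC 1)). intros; unfold PV; simpl; ring.
 - apply (CD_ext (fun t => PV (S M) q t + q (S M) * RtoC (t ^ (S M)))). intros; unfold PV; simpl; auto.
   eapply CD_eq. apply CD_plus. apply IHM. apply CD_scal. apply CD_RtoC. apply derivable_pt_lim_pow.
   unfold PV, Dq. simpl. rewrite RtoC_mult. ring.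
Qed.

Lemma PV_plus M f g s : PV M (fun n => f n + g n) s = PV M f s + PV M g s.
Proof. unfold PV. rewrite <- csum_plus. apply csum_ext; intros; ring. Qed.
Lemma PV_scal M c f s : PV M (fun n => c * f n) s = c * PV M f s.
Proof. unfold PV. rewrite <- csum_scal. apply csum_ext; intros; ring. Qed.
Lemma PV_ext M f g s : (forall n, f n = g n) -> PV M f s = PV M g s.
Proof. intros H. unfold PV. apply csum_ext; intros; rewrite H; auto. Qed.
Lemma PV_zero M f s : (forall n, f n = RtoC 0) -> PV M f s = RtoC 0.
Proof. intros H. unfold PV. apply csum_zero. intros; rewrite H; ring. Qed.

Lemma PV_len L M q s : supp L q -> (L <= M)%nat -> PV M q s = PV L q s.
Proof. intros H HLM. induction HLM. auto. unfold PV in *. simpl. rewrite IHHLM. rewrite H by lia. ring. Qed.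

Lemma CD_PV_supp M q s : supp M q -> CD (PV M q) s (PV M (Dq q) s).
Proof. intros H. destruct M.
 - eapply CD_ext. 2: apply (CD_const (RtoC 0)). intros; reflexivity.
 - eapply CD_eq. apply CD_PV. unfold PV. simpl. unfold Dq. rewrite (H (S M)) by lia. ring.
Qed.

Lemma supp_T M c q : supp M q -> supp M (T c q).
Proof. intros H n Hn. unfold T, Dq. rewrite H by lia. rewrite H by lia. ring. Qed.
Lemma supp_Tit M K c q : supp M q -> supp M (Tit K c q).
Proof. intros H. induction K; simpl; auto. apply supp_T; auto. Qed.

Lemma zero_deriv f s l : 0 < s -> (forall t, 0 < t -> f t = RtoC 0) -> CD f s l -> l = RtoC 0.
Proof. intros Hs Hf D. apply (CD_unique f s). auto.
 eapply CD_ext_loc. 2: apply (CD_const (RtoC 0)).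
 exists (mkposreal s Hs). intros t Ht. simpl in Ht. unfold ball in Ht; simpl in Ht.
 unfold AbsRing_ball, abs, minus, plus, opp in Ht; simpl in Ht. symmetry. apply Hf.
 apply Rabs_def2 in Ht. lra. Qed.

Lemma Cmult_reg c g : c <> RtoC 0 -> c * g = RtoC 0 -> g = RtoC 0.
Proof. intros Hc H. transitivity (/ c * (c * g)). field. auto. rewrite H. ring. Qed.

Lemma INR_S_nz n : RtoC (INR (S n)) <> RtoC 0.
Proof. intros H. apply RtoC_inj in H. pose proof (pos_INR n). rewrite S_INR in H. lra. Qed.

Lemma poly_zero M : forall q, supp M q -> (forall s, 0 < s -> PV M q s = RtoC 0) -> forall n, q n = RtoC 0.
Proof.
 induction M; intros q Hs Hz.
 - intros n. apply Hs. lia.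
 - assert (HD : forall n, Dq q n = RtoC 0).
   { apply IHM. intros n Hn. unfold Dq. rewrite Hs by lia. ring.
     intros s Hs0. apply (zero_deriv (PV (S M) q) s); auto. apply CD_PV. }
   assert (HS : forall n, q (S n) = RtoC 0).
   { intros n. apply (Cmult_reg (RtoC (INR (S n)))). apply INR_S_nz. apply HD. }
   assert (H0 : q O = RtoC 0).
   { pose proof (Hz 1%R Rlt_0_1) as K. unfold PV in K. rewrite csum_first in K.
     rewrite csum_zero in K. simpl in K. rewrite <- K. ring. intros k _. rewrite HS. ring. }
   intros [|n]; auto.
Qed.

Definition E (M : nat) (d : list ((nat -> C) * C)) (s : R) : C :=
  Csum (map (fun p => PV M (fst p) s * ex (snd p) s) d).

Definition mapT (K : nat) (b : C) (d : list ((nat -> C) * C)) : list ((nat -> C) * C) :=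
  map (fun p => (Tit K (az (snd p) - b) (fst p), snd p)) d.

Lemma CD_E M d s : (forall p, In p d -> supp M (fst p)) ->
  CD (E M d) s (E M (map (fun p => (T (az (snd p)) (fst p), snd p)) d) s).
Proof. intros H. induction d; unfold E, Csum in *; simpl.
 - apply CD_const.
 - apply CD_plus. eapply CD_eq. apply CD_mult. apply CD_PV_supp. apply H; simpl; auto. apply CD_ex.
   unfold T. rewrite PV_plus, PV_scal. ring.
   apply IHd. intros; apply H; simpl; auto. Qed.

Lemma E_lin M d b s : E M (map (fun p => (T (az (snd p) - b) (fst p), snd p)) d) s =
  E M (map (fun p => (T (az (snd p)) (fst p), snd p)) d) s - b * E M d s.
Proof. induction d; unfold E, Csum in *; simpl. ring. rewrite IHd. unfold T.
 rewrite !PV_plus, !PV_scal. ring. Qed.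

Lemma E_iter M b K d : (forall p, In p d -> supp M (fst p)) -> (forall s, 0 < s -> E M d s = RtoC 0) ->
  forall s, 0 < s -> E M (mapT K b d) s = RtoC 0.
Proof. intros Hs Hz. induction K; intros s Hpos.
 - unfold mapT. simpl. rewrite <- (Hz s Hpos). unfold E. f_equal. rewrite map_map. simpl.
   apply map_ext. intros [q w]. reflexivity.
 - assert (Eq : mapT (S K) b d = map (fun p => (T (az (snd p) - b) (fst p), snd p)) (mapT K b d)).
   { unfold mapT. rewrite map_map. simpl. reflexivity. }
   rewrite Eq, E_lin. rewrite (IHK s Hpos).
   assert (Hs' : forall p, In p (mapT K b d) -> supp M (fst p)).
   { intros p Hp. unfold mapT in Hp. apply in_map_iff in Hp. destruct Hp as [p0 [<- Hp0]]. simpl.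
     apply supp_Tit. auto. }
   rewrite (zero_deriv (E M (mapT K b d)) s _ Hpos IHK (CD_E M _ s Hs')). ring.
Qed.

Lemma Tit_plus K c f g : forall n, Tit K c (fun m => f m + g m) n = Tit K c f n + Tit K c g n.
Proof. induction K; intros n; simpl. auto. unfold T, Dq. rewrite !IHK. ring. Qed.
Lemma Tit_zero K c : forall n, Tit K c (fun _ => RtoC 0) n = RtoC 0.
Proof. induction K; intros n; simpl. auto. unfold T, Dq. rewrite !IHK. ring. Qed.
Lemma Tit_ext K c f g : (forall m, f m = g m) -> forall n, Tit K c f n = Tit K c g n.
Proof. intros H. induction K; intros n; simpl. auto. unfold T, Dq. rewrite !IHK. auto. Qed.

Definition keq (a b : C) : bool := if Ceq_dec a b then true else false.

Definition GS (d : list ((nat -> C) * C)) (z : C) (n : nat) : C :=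
  Csum (map (fun p => if Ceq_dec (snd p) z then fst p n else RtoC 0) d).

Lemma GS_T K b d z n : GS (mapT K b d) z n = Tit K (az z - b) (GS d z) n.
Proof. revert n. induction d; intros n; unfold GS, mapT, Csum in *; simpl.
 - symmetry. apply Tit_zero.
 - rewrite IHd. rewrite Tit_plus. f_equal. destruct (Ceq_dec (snd a) z) as [<-|Hne].
   + apply Tit_ext. intros m. reflexivity.
   + symmetry. apply Tit_zero.
Qed.

Lemma T_inj M c g : c <> RtoC 0 -> supp M g -> (forall n, T c g n = RtoC 0) -> forall n, g n = RtoC 0.
Proof. intros Hc Hs HT.
 assert (K : forall j n, (M <= n + j)%nat -> g n = RtoC 0).
 { induction j; intros n Hn. apply Hs. lia.
   assert (g (S n) = RtoC 0) by (apply IHj; lia).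
   apply (Cmult_reg c); auto. specialize (HT n). unfold T, Dq in HT. rewrite H in HT.
   rewrite <- HT. ring. }
 intros n. apply (K M). lia. Qed.

Lemma Tit_inj M c K q : c <> RtoC 0 -> supp M q -> (forall n, Tit K c q n = RtoC 0) -> forall n, q n = RtoC 0.
Proof. intros Hc Hs. induction K; simpl; auto. intros H. apply IHK.
 apply (T_inj M c); auto. apply supp_Tit; auto. Qed.

Lemma Tit_kill M q : supp M q -> forall n, Tit M (RtoC 0) q n = RtoC 0.
Proof. intros H.
 assert (K : forall K, supp (M - K) (Tit K (RtoC 0) q)).
 { induction K; simpl. rewrite Nat.sub_0_r. auto.
   intros n Hn. unfold T, Dq. rewrite IHK by lia. ring. }
 intros n. apply (K M). lia. Qed.

Section Filt.
Context {A : Type}.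
Lemma Csum_filter_split (f : A -> C) (P : A -> bool) l :
  Csum (map f l) = Csum (map f (filter P l)) + Csum (map f (filter (fun x => negb (P x)) l)).
Proof. induction l; unfold Csum in *; simpl. ring. destruct (P a); simpl; rewrite IHl; ring. Qed.
Lemma Csum_filter_same (f : A -> C) (P : A -> bool) l :
  (forall p, P p = false -> f p = RtoC 0) -> Csum (map f (filter P l)) = Csum (map f l).
Proof. intros H. induction l; unfold Csum in *; simpl. auto. destruct (P a) eqn:E; simpl; rewrite IHl; auto.
 rewrite H; auto. ring. Qed.
Lemma Csum_filter_zero (f : A -> C) (P : A -> bool) l :
  (forall p, P p = true -> f p = RtoC 0) -> Csum (map f (filter P l)) = RtoC 0.
Proof. intros H. induction l; unfold Csum in *; simpl. auto. destruct (P a) eqn:E; simpl; rewrite IHl; auto.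
 rewrite H; auto. ring. Qed.
Lemma Csum_filter_zero_in (f : A -> C) (P : A -> bool) l :
  (forall p, In p l -> P p = true -> f p = RtoC 0) -> Csum (map f (filter P l)) = RtoC 0.
Proof. intros H. induction l; unfold Csum in *; simpl. auto. destruct (P a) eqn:E; simpl; rewrite IHl; auto.
 rewrite H; simpl; auto. ring. all: intros; apply H; simpl; auto. Qed.
Lemma Csum_zero_all (f : A -> C) l : (forall p, In p l -> f p = RtoC 0) -> Csum (map f l) = RtoC 0.
Proof. intros H. induction l; unfold Csum in *; simpl. auto. rewrite H, IHl; simpl; auto. ring. intros; apply H; simpl; auto. Qed.
Lemma filter_len (P : A -> bool) l : (length (filter P l) <= length l)%nat.
Proof. induction l; simpl. lia. destruct (P a); simpl; lia. Qed.

Lemma G1 (v k : A -> C) (psi : C -> C) : forall N l, (length l <= N)%nat ->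
  (forall z, Csum (map (fun p => if Ceq_dec (k p) z then v p else RtoC 0) l) = RtoC 0) ->
  Csum (map (fun p => v p * psi (k p)) l) = RtoC 0.
Proof.
 induction N; intros l Hl Hg.
 - destruct l; simpl in Hl; [reflexivity | lia].
 - destruct l as [|p0 l']. reflexivity.
   set (z0 := k p0).
   rewrite (Csum_filter_split _ (fun p => keq (k p) z0)).
   assert (E1 : Csum (map (fun p => v p * psi (k p)) (filter (fun p => keq (k p) z0) (p0 :: l'))) = RtoC 0).
   { transitivity (psi z0 * Csum (map (fun p => if Ceq_dec (k p) z0 then v p else RtoC 0) (p0 :: l'))).
     2: rewrite Hg; ring.
     generalize (p0 :: l'). intros l. induction l; unfold Csum in *; simpl. ring.
     unfold keq in *. destruct (Ceq_dec (k a) z0) as [Ea|Ea]; simpl; rewrite IHl. rewrite Ea. ring. ring. }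
   rewrite E1. rewrite IHN. ring.
   + simpl. unfold keq at 1. destruct (Ceq_dec (k p0) z0) as [_|Hn]; [|exfalso; apply Hn; reflexivity]. simpl.
     pose proof (filter_len (fun x => negb (keq (k x) z0)) l'). simpl in Hl. lia.
   + intros z. destruct (Ceq_dec z z0) as [->|Hz].
     * apply Csum_filter_zero. intros p Hp. unfold keq in Hp. destruct (Ceq_dec (k p) z0); simpl in Hp; [discriminate | reflexivity].
     * rewrite Csum_filter_same. apply Hg. intros p Hp. unfold keq in Hp. destruct (Ceq_dec (k p) z0) as [E|E]; simpl in Hp; try discriminate.
       destruct (Ceq_dec (k p) z) as [E'|E']; auto. exfalso; apply Hz. rewrite <- E', <- E. reflexivity.
Qed.
End Filt.

Lemma Csum_csum {A} (F : A -> nat -> C) M l :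
  Csum (map (fun p => csum (F p) M) l) = csum (fun n => Csum (map (fun p => F p n) l)) M.
Proof. induction l; unfold Csum in *; simpl. symmetry. apply csum_zero. auto.
 rewrite IHl. rewrite <- csum_plus. auto. Qed.

Lemma E_swap M l s : E M l s = csum (fun n => Csum (map (fun p => fst p n * (RtoC (s ^ n) * ex (snd p) s)) l)) M.
Proof. unfold E. rewrite <- Csum_csum. f_equal. apply map_ext. intros p. unfold PV. rewrite csum_mul_r.
 apply csum_ext. intros; ring. Qed.

Lemma supp_GS M d z : (forall p, In p d -> supp M (fst p)) -> supp M (GS d z).
Proof. intros H n Hn. unfold GS. apply Csum_zero_all. intros p Hp. destruct (Ceq_dec (snd p) z); auto. apply H; auto. Qed.

Lemma E_group M d z0 s : E M (filter (fun p => keq (snd p) z0) d) s = PV M (GS d z0) s * ex z0 s.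
Proof. induction d; unfold E, GS, Csum in *; simpl. rewrite PV_zero; auto. ring.
 rewrite PV_plus. destruct (Ceq_dec (snd a) z0) as [Ea|Ea].
 - assert (K : keq (snd a) z0 = true) by (unfold keq; destruct Ceq_dec; congruence). rewrite K. simpl.
   rewrite IHd. rewrite Ea. replace (PV M (fun n => fst a n) s) with (PV M (fst a) s) by reflexivity. ring.
 - assert (K : keq (snd a) z0 = false) by (unfold keq; destruct Ceq_dec; congruence). rewrite K.
   rewrite IHd. rewrite (PV_zero M (fun _ => RtoC 0)); auto. ring.
Qed.

Lemma az_inj z w : az z = az w -> z = w.
Proof. intros H. transitivity (az z * (RtoC 2 * - Ci)). unfold az.
 replace (/ RtoC 2) with (RtoC (/ 2)) by (rewrite RtoC_inv by lra; reflexivity). Cfield.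
 rewrite H. unfold az. replace (/ RtoC 2) with (RtoC (/ 2)) by (rewrite RtoC_inv by lra; reflexivity). Cfield. Qed.

Lemma indep M : forall N d, (length d <= N)%nat -> (forall p, In p d -> supp M (fst p)) ->
  (forall s, 0 < s -> E M d s = RtoC 0) -> forall z n, GS d z n = RtoC 0.
Proof.
 induction N; intros d Hl Hs Hz.
 - destruct d; simpl in Hl; [|lia]. intros; reflexivity.
 - destruct d as [|p0 d']. intros; reflexivity.
   set (z0 := snd p0). set (b := az z0).
   set (dK := mapT M b (p0 :: d')).
   set (d2 := filter (fun p => negb (keq (snd p) z0)) dK).
   assert (HsK : forall p, In p dK -> supp M (fst p)).
   { intros p Hp. unfold dK, mapT in Hp. apply in_map_iff in Hp. destruct Hp as [p1 [<- Hp1]]. simpl.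
     apply supp_Tit. auto. }
   assert (HzK : forall s, 0 < s -> E M dK s = RtoC 0) by (apply E_iter; auto).
   assert (Hz2 : forall s, 0 < s -> E M d2 s = RtoC 0).
   { intros s Hs0. pose proof (HzK s Hs0) as K. unfold E in K. rewrite (Csum_filter_split _ (fun p => keq (snd p) z0)) in K.
     rewrite Csum_filter_zero_in in K. unfold E, d2. rewrite <- K. ring.
     intros p Hp Hk. unfold keq in Hk. destruct (Ceq_dec (snd p) z0) as [Ep|Ep]; try discriminate.
     unfold dK, mapT in Hp. apply in_map_iff in Hp. destruct Hp as [p1 [<- Hp1]]. simpl in Ep |- *.
     rewrite Ep. unfold b. replace (az z0 - az z0) with (RtoC 0) by ring.
     rewrite PV_zero. ring. apply Tit_kill. apply Hs. auto. }
   assert (Hlen : (length d2 <= N)%nat).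
   { unfold d2, dK, mapT. simpl map. simpl filter.
     assert (K : keq (snd p0) z0 = true) by (unfold keq; destruct Ceq_dec as [_|Hn]; [reflexivity|exfalso; apply Hn; reflexivity]). rewrite K. simpl.
     pose proof (filter_len (fun p => negb (keq (snd p) z0)) (map (fun p => (Tit M (az (snd p) - b) (fst p), snd p)) d')).
     rewrite length_map in H. simpl in Hl. lia. }
   assert (Hs2 : forall p, In p d2 -> supp M (fst p)).
   { intros p Hp. unfold d2 in Hp. apply filter_In in Hp. apply HsK. apply Hp. }
   pose proof (IHN d2 Hlen Hs2 Hz2) as IH2.
   assert (Hother : forall z n, z <> z0 -> GS (p0 :: d') z n = RtoC 0).
   { intros z n Hne.
     assert (Tz : forall m, Tit M (az z - b) (GS (p0 :: d') z) m = RtoC 0).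
     { intros m. rewrite <- GS_T. fold dK. rewrite <- (IH2 z m). unfold GS, d2. symmetry.
       apply Csum_filter_same. intros p Hp. unfold keq in Hp. destruct (Ceq_dec (snd p) z0) as [Ep|Ep]; try discriminate.
       destruct (Ceq_dec (snd p) z) as [Ez|Ez]; auto. exfalso. apply Hne. rewrite <- Ez, Ep. reflexivity. }
     apply (Tit_inj M (az z - b) M (GS (p0 :: d') z)); auto.
     intros E0. apply Hne. apply az_inj. unfold b in E0. transitivity (az z - az z0 + az z0). ring. rewrite E0. ring.
     apply supp_GS. auto. }
   intros z n. destruct (Ceq_dec z z0) as [->|Hne]; [|apply Hother; auto].
   apply (poly_zero M (GS (p0 :: d') z0)). apply supp_GS; auto.
   intros s Hs0. apply (Cmult_reg (ex z0 s)). apply ex_nz. rewrite Cmult_comm. rewrite <- E_group.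
   pose proof (Hz s Hs0) as K. unfold E in K. rewrite (Csum_filter_split _ (fun p => keq (snd p) z0)) in K.
   assert (R0 : Csum (map (fun p => PV M (fst p) s * ex (snd p) s) (filter (fun x => negb (keq (snd x) z0)) (p0 :: d'))) = RtoC 0).
   { fold (E M (filter (fun x => negb (keq (snd x) z0)) (p0 :: d')) s). rewrite E_swap. apply csum_zero. intros m Hm.
     apply (G1 (fun p => fst p m) snd (fun w => RtoC (s ^ m) * ex w s) (length (filter (fun x => negb (keq (snd x) z0)) (p0 :: d')))); auto.
     intros w. destruct (Ceq_dec w z0) as [->|Hw].
     - apply Csum_filter_zero. intros p Hp. unfold keq in Hp. destruct (Ceq_dec (snd p) z0); simpl in Hp; [discriminate|reflexivity].
     - rewrite Csum_filter_same. apply Hother. auto. intros p Hp. unfold keq in Hp. destruct (Ceq_dec (snd p) z0) as [Ep|Ep]; try discriminate.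
       destruct (Ceq_dec (snd p) w) as [Ew|Ew]; auto. exfalso. apply Hw. rewrite <- Ew, Ep. reflexivity. }
   rewrite R0 in K. unfold E. rewrite <- K. ring.
Qed.

Definition negd (r : list (list C * C)) := map (fun p => (map Copp (fst p), snd p)) r.

Lemma nth_Copp l n : nth n (map Copp l) (RtoC 0) = - nth n l (RtoC 0).
Proof. revert n. induction l; intros [|n]; simpl; auto; apply injective_projections; simpl; ring. Qed.

Lemma csum_opp (f : nat -> C) n : csum (fun k => - f k) n = - csum f n.
Proof. induction n; simpl. apply injective_projections; simpl; ring. rewrite IHn. ring. Qed.

Lemma Lin_neg rho F : Lin (map Copp rho) F = - Lin rho F.
Proof. rewrite !Lin_csum. rewrite length_map. rewrite <- csum_opp. apply csum_ext. intros. rewrite nth_Copp. ring. Qed.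

Lemma csum_len (f : nat -> C) L M : (L <= M)%nat -> (forall n, (L <= n)%nat -> f n = RtoC 0) -> csum f M = csum f L.
Proof. intros H Hf. induction H. auto. simpl. rewrite IHle, Hf by lia. ring. Qed.

Definition Mx (d : list (list C * C)) : nat := fold_right (fun p m => Nat.max (length (fst p)) m) O d.
Lemma Mx_ge d p : In p d -> (length (fst p) <= Mx d)%nat.
Proof. induction d; simpl; intros H. contradiction. destruct H as [->|H]. lia. specialize (IHd H). lia. Qed.

Definition dq (d : list (list C * C)) : list ((nat -> C) * C) :=
  map (fun p => (fun n => nth n (fst p) (RtoC 0), snd p)) d.

Section WDsec.
Variable e : nat.
Hypothesis He : (e = 0 \/ e = 1)%nat.

Lemma NF_app r1 r2 x : NF e (r1 ++ r2) x = NF e r1 x + NF e r2 x.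
Proof. unfold NF. rewrite map_app, Csum_app. auto. Qed.
Lemma SF_app r1 r2 x : SF e (r1 ++ r2) x = SF e r1 x + SF e r2 x.
Proof. unfold SF. rewrite map_app, Csum_app. auto. Qed.
Lemma NF_neg r x : NF e (negd r) x = - NF e r x.
Proof. unfold NF, negd. induction r; unfold Csum in *; simpl. apply injective_projections; simpl; ring.
 rewrite IHr. unfold fT. simpl. rewrite !peval_Lin, Lin_neg. ring. Qed.
Lemma SF_neg r x : SF e (negd r) x = - SF e r x.
Proof. unfold SF, negd. induction r; unfold Csum in *; simpl. apply injective_projections; simpl; ring.
 rewrite IHr. unfold sT. simpl. rewrite !rhotL_Lin, Lin_neg. ring. Qed.

Lemma supp_nth rho : supp (length rho) (fun n => nth n rho (RtoC 0)).
Proof. intros n Hn. apply nth_overflow. auto. Qed.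

Lemma NF_E d t : NF e d t = RtoC (t ^ e) * E (Mx d) (dq d) (t * t).
Proof.
 unfold NF, E, dq. rewrite map_map. simpl.
 assert (H : forall p, In p d -> (length (fst p) <= Mx d)%nat) by (intros; apply Mx_ge; auto).
 generalize (Mx d) H. intros M HM. clear H. induction d; unfold Csum in *; simpl. ring.
 rewrite IHd by (intros; apply HM; simpl; auto).
 unfold fT. rewrite peval_Lin, Lin_csum.
 rewrite (PV_len (length (fst a)) M) by (try apply supp_nth; apply HM; simpl; auto).
 unfold PV. rewrite (csum_ext (fun n => nth n (fst a) (RtoC 0) * Cpow (RtoC (t * t)) n)
   (fun n => nth n (fst a) (RtoC 0) * RtoC ((t * t) ^ n))) by (intros; rewrite Cpow_RtoC; auto).
 unfold xi, ex. ring.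
Qed.

Lemma WD_zero d : (forall x, NF e d x = RtoC 0) -> forall x, SF e d x = RtoC 0.
Proof.
 intros H x.
 set (M := Mx d).
 assert (HE : forall s, 0 < s -> E M (dq d) s = RtoC 0).
 { intros s Hs. pose proof (H (sqrt s)) as K. rewrite NF_E in K. rewrite sqrt_sqrt in K by lra.
   apply (Cmult_reg (RtoC (sqrt s ^ e))); auto. intros Z. apply RtoC_inj in Z.
   apply (pow_nonzero (sqrt s) e). apply Rgt_not_eq. apply sqrt_lt_R0. auto. auto. }
 assert (Hs : forall p, In p (dq d) -> supp M (fst p)).
 { intros p Hp. unfold dq in Hp. apply in_map_iff in Hp. destruct Hp as [p1 [<- Hp1]]. simpl.
   intros n Hn. apply nth_overflow. pose proof (Mx_ge d p1 Hp1). unfold M in Hn. lia. }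
 pose proof (indep M (length (dq d)) (dq d) (le_n _) Hs HE) as G.
 unfold SF.
 rewrite (map_ext_in (fun p => sT e p x) (fun p => csum (fun n => nth n (fst p) (RtoC 0) * (Ci / RtoC 2 * Sfun e n (snd p) x)) M)).
 2:{ intros p Hp. rewrite sT_csum. rewrite (csum_len _ (length (fst p)) M). apply csum_ext. intros; ring.
     apply Mx_ge; auto. intros n Hn. rewrite nth_overflow by auto. ring. }
 rewrite Csum_csum. apply csum_zero. intros n Hn.
 apply (G1 (fun p => nth n (fst p) (RtoC 0)) snd (fun w => Ci / RtoC 2 * Sfun e n w x) (length d)); auto.
 intros z. transitivity (GS (dq d) z n). 2: apply G. unfold GS, dq. rewrite map_map. simpl. reflexivity.
Qed.

Lemma WD r1 r2 : (forall x, NF e r1 x = NF e r2 x) -> forall x, SF e r1 x = SF e r2 x.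
Proof.
 intros H x.
 assert (Z : SF e (r1 ++ negd r2) x = RtoC 0).
 { apply WD_zero. intros t. rewrite NF_app, NF_neg, H. ring. }
 rewrite SF_app, SF_neg in Z. transitivity (SF e r1 x - SF e r2 x + SF e r2 x). ring.
 replace (SF e r1 x - SF e r2 x) with (SF e r1 x + - SF e r2 x) by ring. rewrite Z. ring.
Qed.
End WDsec.


Lemma valid_nz r : valid_rep r -> forall p, In p r -> RtoC 1 + snd p * snd p <> RtoC 0.
Proof. intros H p Hp. unfold valid_rep in H. rewrite Forall_forall in H. destruct (H p Hp) as [H1 H2].
 destruct p as [rho [a b]]. simpl in *. intros Z. apply H2.
 injection Z; intros Z2 Z1. assert (a = 0%R) by nra. subst a. assert (b = 1%R) by nra. subst b. reflexivity. Qed.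

Section Main.
Variable e : nat.
Hypothesis He : (e = 0 \/ e = 1)%nat.

Lemma HasD2_fT p : exists G, HasD2 (fT e p) G.
Proof. eexists. eapply HasD2_ext. 3: apply (HasD2_csum
  (fun n x => nth n (fst p) (RtoC 0) * Mfun e n (snd p) x)
  (fun n x => nth n (fst p) (RtoC 0) * (RtoC (x ^ e) * Qe (Pm n) (P1m n) (P2m n) (snd p) e x * xi (snd p) x)) (length (fst p))).
 intros; symmetry; apply fT_csum. intros; reflexivity.
 intros n. apply HasD2_scal. apply HasD2_M; auto. Qed.

Lemma HasD2_sT p : exists G, HasD2 (sT e p) G.
Proof. eexists. eapply HasD2_ext. 3: apply (HasD2_csum
  (fun n x => Ci / RtoC 2 * nth n (fst p) (RtoC 0) * Sfun e n (snd p) x)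
  (fun n x => Ci / RtoC 2 * nth n (fst p) (RtoC 0) * (RtoC (x ^ e) * Qe (W n (Y (snd p))) (P1n (snd p) n) (P2n (snd p) n) (snd p) e x * xi (snd p) x)) (length (fst p))).
 intros; symmetry; apply sT_csum. intros; reflexivity.
 intros n. apply HasD2_scal. apply HasD2_S; auto. Qed.

Lemma hop_Csum' (l : list (list C * C)) (F : list C * C -> R -> C) x : (forall p, exists G, HasD2 (F p) G) ->
  hop (fun x => Csum (map (fun p => F p x) l)) x = Csum (map (fun p => hop (F p) x) l).
Proof. intros H. induction l.
 - unfold Csum; simpl. rewrite (hop_char _ _ x HasD2_zero). ring.
 - assert (Ex : exists G, HasD2 (fun x => Csum (map (fun p => F p x) l)) G).
   { clear IHl. induction l. exists (fun _ => RtoC 0). apply HasD2_zero.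
     destruct IHl as [G1 HG1]. destruct (H a0) as [G0 HG0]. eexists. unfold Csum; simpl.
     apply (HasD2_plus (F a0) G0 _ G1 HG0 HG1). }
   destruct Ex as [G1 HG1]. destruct (H a) as [G0 HG0].
   unfold Csum in *; simpl. rewrite <- IHl.
   rewrite (hop_char _ _ x (HasD2_plus _ _ _ _ HG0 HG1)). rewrite (hop_char _ _ x HG0), (hop_char _ _ x HG1). ring.
Qed.

Lemma main_e r r' : valid_rep r -> (forall x, NF e r' x = hop (NF e r) x) ->
  forall x, hop (SF e r) x - SF e r' x = - Ci * NF e r x.
Proof.
 intros Hr H x.
 assert (E1 : forall x, NF e r' x = NF e (rr e r) x).
 { intros t. rewrite H. unfold NF. rewrite (hop_Csum' r (fT e)) by apply HasD2_fT.
   unfold rr. rewrite Csum_flat_map. f_equal. apply map_ext. intros p. apply hop_fT; auto. }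
 rewrite (WD e He r' (rr e r) E1 x).
 unfold SF at 1. rewrite (hop_Csum' r (sT e)) by apply HasD2_sT.
 unfold SF, rr. rewrite Csum_flat_map. unfold NF.
 pose proof (valid_nz r Hr) as Hnz. clear H E1 Hr.
 induction r; unfold Csum in *; simpl. ring.
pose proof (hop_sT e He a x (Hnz a (or_introl eq_refl))) as K. unfold Csum in K.
 rewrite Cmult_plus_distr_l, <- K, <- IHr. ring. intros; apply Hnz; simpl; auto.
Qed.
End Main.

Local Close Scope C_scope.

Theorem lemma4p6 :
  (forall r r' : list (list C * C),
     valid_rep r -> valid_rep r' ->
     (forall x : R, N0fun r' x = hop (N0fun r) x) ->
     forall x : R, (hop (Shat r) x - Shat r' x)%C = (- Ci * N0fun r x)%C)
  /\
  (forall r r' : list (list C * C),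
     valid_rep r -> valid_rep r' ->
     (forall x : R, N1fun r' x = hop (N1fun r) x) ->
     forall x : R, (hop (Shatstar r) x - Shatstar r' x)%C = (- Ci * N1fun r x)%C).
Proof.
 assert (EN0 : forall r x, N0fun r x = NF 0 r x).
 { intros r x. unfold N0fun, NF. f_equal. apply map_ext. intros p. unfold fT. simpl. ring. }
 assert (EN1 : forall r x, N1fun r x = NF 1 r x).
 { intros r x. unfold N1fun, NF. f_equal. apply map_ext. intros p. unfold fT. simpl. rewrite Rmult_1_r. ring. }
 assert (ES0 : forall r x, Shat r x = SF 0 r x).
 { intros r x. unfold Shat, SF. f_equal. apply map_ext. intros p. unfold sT. simpl. ring. }
 assert (ES1 : forall r x, Shatstar r x = SF 1 r x).
 { intros r x. unfold Shatstar, SF. f_equal. apply map_ext. intros p. unfold sT. simpl. rewrite Rmult_1_r. ring. }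
 split.
 - intros r r' Hr _ H x. rewrite (hop_ext _ _ x (ES0 r)), ES0, EN0.
   apply main_e; auto. intros t. rewrite <- EN0, H. apply hop_ext. auto.
 - intros r r' Hr _ H x. rewrite (hop_ext _ _ x (ES1 r)), ES1, EN1.
   apply main_e; auto. intros t. rewrite <- EN1, H. apply hop_ext. auto.
Qed.
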